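(* Let $\alpha,\beta\in\mathbb{R}$ satisfy $4<\alpha^2<6$ and $\frac{4}{100}<\beta<\frac{165}{100}$, and let $q_{\alpha,\beta}(w)=w^4+\alpha w^3+(\beta-4)w^2-\alpha w+3$ for $w\in\mathbb{C}$. Then $q_{\alpha,\beta}$ has $4$ pairwise different roots, exactly $2$ of which are real, and the remaining $2$ are non-real and complex conjugate to each other. *)

(* Defs.v *)
From HB Require Import structures.
From mathcomp Require Import all_boot all_order all_algebra.
From mathcomp Require Import complex reals.
Set Implicit Arguments. Unset Strict Implicit. Unset Printing Implicit Defensive.
Import Order.TTheory GRing.Theory Num.Theory ComplexField.
Local Open Scope ring_scope.
Local Open Scope complex_scope.

Definition q_ab (R : realType) (a b : R) : {poly R[i]} :=
  'X^4 + (a%:C)%:P * 'X^3 + ((b - 4)%:C)%:P * 'X^2 - (a%:C)%:P * 'X + 3%:P.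

(* Main.v *)
Require Import Defs.
From HB Require Import structures.
From mathcomp Require Import all_boot all_order all_algebra.
From mathcomp Require Import complex reals polyrcf ring lra.
Import Order.TTheory GRing.Theory Num.Theory ComplexField.
Local Open Scope ring_scope.

Definition pr {R : realType} (a b x : R) := x^+4 + a*x^+3 + (b-4)*x^+2 - a*x + 3.

Lemma pos1 (R : realType) (a b x : R) : 2 < a -> a < 245/100 -> 4/100 < b -> 0 <= x -> 0 < pr a b x.
Proof.
move=> a2 a3 b0 x0.
have e : pr a b x = (x^+2-1)*(x^+2+a*x-3) + b*x^+2 by rewrite /pr; ring.
rewrite e.
have [x1|x1] := leP 1 x.
  have h1 : 0 <= x^+2 - 1 by nra.
  have h2 : 0 <= x^+2 + a*x - 3 by nra.
  have h3 : 0 < b * x^+2 by nra.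
  have := mulr_ge0 h1 h2; lra.
have [x2|x2] := leP (x^+2 + a*x - 3) 0.
  have h1 : x^+2 - 1 <= 0 by nra.
  have := mulr_le0 h1 x2.
  have [->|xp] := eqVneq x 0; first by rewrite expr0n /=; lra.
  have : 0 < x by rewrite lt_def xp.
  nra.
have xl : 89/100 < x by nra.
set u := 1 - x.
have u0 : 0 < u by rewrite /u; lra.
have u1 : u < 11/100 by rewrite /u; lra.
have ex : x = 1 - u by rewrite /u; ring.
have h1 : x^+2 + a*x - 3 < 45/100 - 445/100*u + u^+2 by rewrite ex; nra.
have h2 : 0 < x^+2 - 1 + 2*u by rewrite ex; nra.
have h3 : 1 - x^+2 <= 2 * u by rewrite ex; nra.
have h4 : 0 <= 1 - x^+2 by nra.
have h5 : (1 - x^+2) * (x^+2 + a*x - 3) <= 2*u*(45/100 - 434/100*u).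
  have h6 : (1 - x^+2) * (x^+2 + a*x - 3) <= (2*u) * (x^+2 + a*x - 3).
    apply: ler_wpM2r; [exact: ltW | exact: h3].
  nra.
have h7 : 2*u*(45/100 - 434/100*u) < 3/100.
  have := sqr_ge0 (u - 5/100); rewrite !expr2; nra.
have h8 : 3/100 < b * x^+2 by nra.
nra.
Qed.

Lemma roots_pos (R : realType) (a b : R) : 2 < a -> a < 245/100 -> 4/100 < b -> b < 165/100 ->
  exists r1 r2, [/\ pr a b r1 = 0, pr a b r2 = 0, r1 < -2, -2 < r2 & r2 < -1].
Proof.
move=> a2 a3 b0 b1.
pose P : {poly R} := 'X^4 + a%:P * 'X^3 + (b-4)%:P * 'X^2 - a%:P * 'X + 3%:P.
have hP x : P.[x] = pr a b x by rewrite /P /pr !hornerE.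
have p4 : pr a b (-4) = 195 - 60*a + 16*b by rewrite /pr; ring.
have p2 : pr a b (-2) = 3 - 6*a + 4*b by rewrite /pr; ring.
have p1 : pr a b (-1) = b by rewrite /pr; ring.
have [r1 /andP [_ h1] rt1] : exists2 x : R, -4 <= x <= -2 & root (-P) x.
  apply: poly_ivt; first lra.
  rewrite !hornerN !hP p4 p2; apply/andP; split; lra.
have [r2 /andP [h2 h3] rt2] : exists2 x : R, -2 <= x <= -1 & root P x.
  apply: poly_ivt; first lra.
  rewrite !hP p1 p2; apply/andP; split; lra.
move: rt1 rt2; rewrite /root hornerN !hP oppr_eq0 => /eqP e1 /eqP e2.
exists r1, r2; split => //.
- rewrite lt_neqAle h1 andbT; apply/eqP => E; move: e1; rewrite E p2; lra.
- rewrite lt_neqAle h2 andbT; apply/eqP => E; move: e2; rewrite -E p2; lra.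
- rewrite lt_neqAle h3 andbT; apply/eqP => E; move: e2; rewrite E p1; lra.
Qed.

Local Open Scope complex_scope.

Lemma cE (R : realType) (x y : R) : x +i* y = x%:C + 'i * y%:C.
Proof. exact: (complexE (x +i* y)). Qed.
Lemma cEc (R : realType) (x y : R) : (x +i* y)^* = x%:C - 'i * y%:C.
Proof. by apply/eqP; simpc. Qed.

Lemma cEc2 (R : realType) (x y : R) : Num.conj (x +i* y) = x%:C - 'i * y%:C.
Proof. exact: cEc. Qed.

Lemma gen (R : realType) (a b r1 r2 s t : R) :
  pr a b r1 = 0 -> pr a b r2 = 0 -> r1 != r2 ->
  s = a + r1 + r2 -> t = b - 4 + (r1+r2)*s - r1*r2 ->
  0 < pr a b (-s/2) -> 0 < (-s/2 - r1) * (-s/2 - r2) ->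
  exists (r1 r2 : R) (z : R[i]),
    [/\ r1 <> r2, Im z != 0, r1%:C <> z, r2%:C <> z &
     forall w : R[i], root (q_ab a b) w <->
       [\/ w = r1%:C, w = r2%:C, w = z | w = z^*]].
Proof.
move=> h1 h2 hne hs ht hp hq.
pose c1 := -a + (r1+r2)*t - r1*r2*s.
pose c0 := 3 - r1*r2*t.
have fact x : pr a b x = (x-r1)*(x-r2)*(x^+2+s*x+t) + c1 * x + c0.
  by rewrite /pr /c1 /c0 ht hs; ring.
have e1 : c1 * r1 + c0 = 0.
  by move: h1; rewrite fact subrr !mul0r add0r.
have e2 : c1 * r2 + c0 = 0.
  by move: h2; rewrite fact subrr mulr0 mul0r add0r.
have hc1 : c1 = 0.
  have : c1 * (r1 - r2) = 0 by rewrite mulrBr; lra.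
  by move/eqP; rewrite mulf_eq0 (subr_eq0 r1 r2) (negPf hne) orbF => /eqP.
have hc0 : c0 = 0 by move: e1; rewrite hc1 mul0r add0r.
have fact2 x : pr a b x = (x-r1)*(x-r2)*(x^+2+s*x+t).
  by rewrite fact hc1 hc0 mul0r !addr0.
have hdisc : 0 < 4*t - s^+2.
  have h3 : 0 < (-s/2)^+2 + s*(-s/2) + t.
    move: hp; rewrite fact2 => hp'.
    by rewrite -(pmulr_rgt0 _ hq).
  have -> : 4*t - s^+2 = 4 * ((-s/2)^+2 + s*(-s/2) + t) by field.
  by rewrite mulr_gt0.
pose d := Num.sqrt (4*t - s^+2).
have dpos : 0 < d by rewrite /d sqrtr_gt0.
have d2 : d^+2 = 4*t - s^+2 by rewrite /d sqr_sqrtr // ltW.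
pose x0 := -s/2.
pose y0 := d/2.
have hs' : s = -2*x0 by rewrite /x0; field.
have ht' : t = x0^+2 + y0^+2.
  rewrite /x0 /y0.
  have -> : (-s/2)^+2 + (d/2)^+2 = (s^+2 + d^+2)/4 by field.
  by rewrite d2; field.
have y0n : y0 != 0 by rewrite /y0; apply/lt0r_neq0; rewrite divr_gt0.
exists r1; exists r2; exists (x0 +i* y0); split.
- by move/eqP; rewrite (negPf hne).
- by rewrite -complexIm /=; apply/eqP => -[] /eqP; apply/negP.
- by move=> [_ /esym/eqP]; rewrite (negPf y0n).
- by move=> [_ /esym/eqP]; rewrite (negPf y0n).
move=> w.
have key : (w - (x0 +i* y0)) * (w - (x0 +i* y0)^*) = w^+2 + s%:C * w + t%:C.
  rewrite cEc2 cE.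
  have -> : (w - (x0%:C + 'i * y0%:C)) * (w - (x0%:C - 'i * y0%:C))
           = (w - x0%:C)^+2 - 'i^+2 * y0%:C^+2 by ring.
  rewrite sqr_i hs' ht'; ring.
have E : (q_ab a b).[w] = (w - r1%:C) * (w - r2%:C) *
   ((w - (x0 +i* y0)) * (w - (x0 +i* y0)^*)).
  have HQ : (q_ab a b).[w] = (w^+4 + a%:C * w^+3 + (b-4)%:C * w^+2 - a%:C * w + 3).
    by rewrite /q_ab !hornerE.
  rewrite key HQ.
  have : (w^+4 + a%:C * w^+3 + (b-4)%:C * w^+2 - a%:C * w + 3)
     = (w - r1%:C) * (w - r2%:C) * (w^+2 + s%:C * w + t%:C) + c1%:C * w + c0%:C.
    rewrite /c1 /c0 ht hs; ring.
  rewrite hc1 hc0 rmorph0 mul0r !addr0 => ->; by [].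
rewrite /root E !mulf_eq0 !subr_eq0 -!orbA.
split.
- by case/or4P => /eqP ->; [exact: Or41 | exact: Or42 | exact: Or43 | exact: Or44].
- by case => ->; rewrite eqxx ?orbT.
Qed.

Theorem mainTheorem2 (R : realType) (a b : R) :
  4 < a ^+ 2 < 6 -> 4 / 100 < b < 165 / 100 ->
  exists (r1 r2 : R) (z : R[i]),
    [/\ r1 <> r2, Im z != 0, r1%:C <> z, r2%:C <> z &
     forall w : R[i], root (q_ab a b) w <->
       [\/ w = r1%:C, w = r2%:C, w = z | w = z^*]].
Proof.
move=> /andP [ha1 ha2] /andP [hb1 hb2].
have refl (c x : R) : pr c b (- x) = pr (- c) b x by rewrite /pr; ring.
have [ap|an] := ltP 0 a.
  have a2 : 2 < a by nra.
  have a3 : a < 245/100 by nra.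
  have [r1 [r2 [e1 e2 h1 h2 h3]]] := @roots_pos R _ b a2 a3 hb1 hb2.
  have hs : a + r1 + r2 < 0 by lra.
  apply: (@gen R a b r1 r2 (a + r1 + r2) (b - 4 + (r1+r2)*(a + r1 + r2) - r1*r2)) => //.
  - by rewrite neq_lt; apply/orP; left; lra.
  - apply: pos1 => //; lra.
  - apply: mulr_gt0; lra.
have a2 : 2 < - a by nra.
have a3 : - a < 245/100 by nra.
have [r1 [r2 [e1 e2 h1 h2 h3]]] := @roots_pos R _ b a2 a3 hb1 hb2.
have hs : 0 < a - r1 - r2 by lra.
apply: (@gen R a b (-r1) (-r2) (a - r1 - r2) (b - 4 + (-r1-r2)*(a - r1 - r2) - r1*r2)) => //.
- by rewrite refl.
- by rewrite refl.
- by rewrite neq_lt; apply/orP; right; lra.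
- ring.
- have -> : - (a - r1 - r2) / 2 = - ((a - r1 - r2) / 2) by ring.
  rewrite refl; apply: pos1 => //; lra.
- rewrite -mulrNN; apply: mulr_gt0; lra.
Qed.
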